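(* Let $(R,\mathfrak m)$ be a noetherian local ring, $\nu$ a valuation centered on $R$, and $R\to R^{(1)}$ a local blowing up with respect to $\nu$. If $\mathrm{Nil}(R)$ is the only associated prime ideal of $R$, then $\mathrm{Nil}(R^{(1)})$ is the only associated prime ideal of $R^{(1)}$.
   Context: All rings are commutative noetherian with $1$; $\mathrm{Nil}(A)$ denotes the nilradical of $A$. A valuation on a ring $R$ is a map $\nu:R\to\Gamma\cup\{\infty\}$ ($\Gamma$ an ordered abelian group) with $\nu(ab)=\nu(a)+\nu(b)$, $\nu(a+b)\ge\min\{\nu(a),\nu(b)\}$, $\nu(1)=0$, $\nu(0)=\infty$, whose support $\mathrm{supp}(\nu)=\{a:\nu(a)=\infty\}$ is a minimal prime ideal; it extends to localizations at multiplicative sets disjoint from the support via $\nu(a/s)=\nu(a)-\nu(s)$ and restricts to subrings, implicitly. $\nu$ has a center on $R$ if $\nu\ge0$ on $R$; its center is $\mathfrak C_\nu(R)=\{a:\nu(a)>0\}$. $\nu$ is centered on $(R,\mathfrak m)$ if $\nu\ge0$ on $R$ and $\nu>0$ on $\mathfrak m$. Local blowing up: for $b\in R\setminus\mathrm{supp}(\nu)$ let $J(b)=\bigcup_{i\ge1}\mathrm{ann}_R(b^i)$, so $R/J(b)\subseteq R_b$. Given $a_1,\ldots,a_r\in R$ with $\nu(a_i)\ge\nu(b)$, let $R'=(R/J(b))[a_1/b,\ldots,a_r/b]\subseteq R_b$ and $R^{(1)}=R'_{\mathfrak C_\nu(R')}$; the canonical map $R\to R^{(1)}$ is the local blowing up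 of $R$ with respect to $\nu$ along $(b,a_1,\ldots,a_r)$. *)

(* Defs.v *)
From HB Require Import structures.
From mathcomp Require Import all_boot all_order all_algebra.
Set Implicit Arguments. Unset Strict Implicit. Unset Printing Implicit Defensive.
Import Order.TTheory GRing.Theory Num.Theory.
Local Open Scope ring_scope.

Section RingDefs.
Variable R : comPzRingType.

Definition is_ideal (I : R -> Prop) : Prop :=
  [/\ I 0, (forall x y, I x -> I y -> I (x + y)) &
      (forall r x, I x -> I (r * x))].

Definition is_prime_ideal (P : R -> Prop) : Prop :=
  [/\ is_ideal P, ~ P 1 & forall x y, P (x * y) -> P x \/ P y].

Definition is_maximal_ideal (M : R -> Prop) : Prop :=
  [/\ is_ideal M, ~ M 1 &
      forall I, is_ideal I -> (forall x, M x -> I x) -> ~ I 1 ->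
        forall x, I x -> M x].

Definition is_local (m : R -> Prop) : Prop :=
  is_maximal_ideal m /\
  forall M, is_maximal_ideal M -> forall x, M x <-> m x.

Definition noetherian : Prop :=
  forall I : nat -> R -> Prop, (forall n, is_ideal (I n)) ->
    (forall n x, I n x -> I n.+1 x) ->
    exists N, forall n x, (N <= n)%N -> I n x -> I N x.

Definition nilrad (x : R) : Prop := exists n : nat, x ^+ n = 0.

Definition assoc_prime (P : R -> Prop) : Prop :=
  is_prime_ideal P /\ exists x : R, forall y, P y <-> y * x = 0.

Definition nil_only_assoc : Prop :=
  forall P : R -> Prop, assoc_prime P <-> (forall y, P y <-> nilrad y).

End RingDefs.

Definition ordered_group (G : zmodType) (le : rel G) : Prop :=
  [/\ forall x, le x x,
      forall x y, le x y -> le y x -> x = y,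
      forall x y z, le x y -> le y z -> le x z,
      forall x y, le x y || le y x &
      forall x y z, le x y -> le (x + z) (y + z)].

(* Gamma ∪ {∞} is modelled as [option G], with [None] = ∞. *)
Section ValDefs.
Variables (G : zmodType) (le : rel G).

Definition vle (x y : option G) : bool :=
  match x, y with
  | _, None => true
  | None, Some _ => false
  | Some x, Some y => le x y
  end.

Definition vlt (x y : option G) : bool := vle x y && ~~ vle y x.

Definition vadd (x y : option G) : option G :=
  match x, y with
  | Some x, Some y => Some (x + y)
  | _, _ => None
  end.

Definition vmin (x y : option G) : option G := if vle x y then x else y.

Definition supp (R : comPzRingType) (nu : R -> option G) (x : R) : Prop :=
  nu x = None.

Definition is_valuation (R : comPzRingType) (nu : R -> option G) : Prop :=
  [/\ forall x y, nu (x * y) = vadd (nu x) (nu y),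
      forall x y, vle (vmin (nu x) (nu y)) (nu (x + y)),
      nu 1 = Some 0, nu 0 = None &
      is_prime_ideal (supp nu) /\
      forall P, is_prime_ideal P -> (forall x, P x -> supp nu x) ->
        forall x, supp nu x -> P x].

Definition centered_on (R : comPzRingType) (nu : R -> option G)
    (m : R -> Prop) : Prop :=
  (forall x, vle (Some 0) (nu x)) /\ (forall x, m x -> vlt (Some 0) (nu x)).

End ValDefs.

Definition is_localization_away (R Rb : comPzRingType)
    (phi : {rmorphism R -> Rb}) (b : R) : Prop :=
  [/\ exists t, phi b * t = 1,
      forall z : Rb, exists x n, z * phi b ^+ n = phi x &
      forall x y, phi x = phi y -> exists n : nat, b ^+ n * x = b ^+ n * y].

(* The subring R' = (R/J(b))[a_1/b, ..., a_r/b] of R_b, where R/J(b) is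
   identified with the image phi(R) ⊆ R_b: the smallest subring of R_b
   containing phi(R) and the elements a_i/b. *)
Definition is_subring (T : comPzRingType) (S : T -> Prop) : Prop :=
  [/\ S 1, (forall x y, S x -> S y -> S (x - y)) &
      (forall x y, S x -> S y -> S (x * y))].

Definition blowup_ring (R Rb : comPzRingType) (phi : {rmorphism R -> Rb})
    (b : R) (a : seq R) (x : Rb) : Prop :=
  forall S : Rb -> Prop, is_subring S ->
    (forall r, S (phi r)) ->
    (forall ai, ai \in a -> forall y, y * phi b = phi ai -> S y) ->
    S x.

(* The center C_nu(R') = {x in R' : nu(x) > 0}, nu extended to R_b by
   nu(phi(c)/phi(b)^n) = nu(c) - nu(b^n). *)
Definition blowup_center (G : zmodType) (le : rel G) (R Rb : comPzRingType)
    (nu : R -> option G) (phi : {rmorphism R -> Rb}) (b : R) (a : seq R)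
    (x : Rb) : Prop :=
  blowup_ring phi b a x /\
  exists (c : R) (n : nat),
    x * phi b ^+ n = phi c /\ vlt le (nu (b ^+ n)) (nu c).

(* psi : Rb -> R1 presents R1 as the localization of the subring A ⊆ Rb
   at the multiplicative set A \ C (only the values of psi on A matter). *)
Definition is_localization_on (Rb R1 : comPzRingType) (A C : Rb -> Prop)
    (psi : Rb -> R1) : Prop :=
  [/\ psi 1 = 1,
      forall x y, A x -> A y ->
        psi (x + y) = psi x + psi y /\ psi (x * y) = psi x * psi y,
      forall s, A s -> ~ C s -> exists t, psi s * t = 1,
      forall z : R1, exists x s, [/\ A x, A s, ~ C s & z * psi s = psi x] &
      forall x y, A x -> A y -> psi x = psi y ->
        exists c, [/\ A c, ~ C c & c * x = c * y]].

(* R -> R1 (= psi ∘ phi) is the local blowing up of R w.r.t. nu along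
   (b, a_1, ..., a_r). *)
Definition local_blowup (G : zmodType) (le : rel G) (R : comPzRingType)
    (nu : R -> option G) (b : R) (a : seq R) (Rb : comPzRingType)
    (phi : {rmorphism R -> Rb}) (R1 : comPzRingType) (psi : Rb -> R1) : Prop :=
  [/\ nu b <> None,
      forall ai, ai \in a -> vle le (nu b) (nu ai),
      is_localization_away phi b &
      is_localization_on (blowup_ring phi b a) (blowup_center le nu phi b a) psi].

(* Main.v *)
Require Import Defs.
From HB Require Import structures.
From mathcomp Require Import all_boot all_order all_algebra.
From Stdlib Require Import Classical IndefiniteDescription.
Import GRing.Theory.
Set Implicit Arguments. Unset Strict Implicit.
Local Open Scope ring_scope.

Lemma unit_cancel (T : comPzRingType) (w s t : T) : s * t = 1 -> w * s = 0 -> w = 0.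
Proof. move=> st ws. by rewrite -[w]mulr1 -st mulrA ws mul0r. Qed.

Lemma unit_pow (T : comPzRingType) (s t : T) n : s * t = 1 -> s ^+ n * t ^+ n = 1.
Proof. by move=> st; rewrite -exprMn st expr1n. Qed.

Lemma nil_mul (T : comPzRingType) (x y : T) : nilrad x -> nilrad (x * y).
Proof. by case=> n hn; exists n; rewrite exprMn hn mul0r. Qed.

Lemma nil_unit (T : comPzRingType) (u s w t : T) :
  s * t = 1 -> u * s = w -> nilrad w -> nilrad u.
Proof.
move=> st us [k hk]; exists k; apply: (unit_cancel (unit_pow k st)).
by rewrite -exprMn us hk.
Qed.

Lemma nil_pow (T : comPzRingType) (x : T) n : nilrad (x ^+ n) -> nilrad x.
Proof. by case=> k hk; exists (n * k)%N; rewrite exprM. Qed.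

Lemma zd_nil (R : comPzRingType) : noetherian R -> nil_only_assoc R ->
  forall x y : R, y * x = 0 -> x <> 0 -> nilrad y.
Proof.
move=> noeth hna x y yx x0.
apply: NNPP => ny.
pose S t := t <> 0 /\ y * t = 0.
have step : forall t, exists t', S t -> [/\ S t', (forall u, u * t = 0 -> u * t' = 0)
   & exists v, v * t' = 0 /\ v * t <> 0].
{ move=> t. case: (classic (S t)) => [[t0 yt]|nS]; last by exists t => /nS.
  have nprime : ~ (forall u v, (u * v) * t = 0 -> u * t = 0 \/ v * t = 0).
  { move=> pr. apply: ny. apply: (proj1 ((proj1 (hna (fun u => u * t = 0))) _ y)) => //.
    split; last by exists t.
    split => //; last by rewrite mul1r.
    split; first by rewrite mul0r.
    - by move=> u v hu hv; rewrite mulrDl hu hv addr0.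
    - by move=> r u hu; rewrite -mulrA hu mulr0. }
  have [u Hu] := not_all_ex_not _ _ nprime.
  have [v Hv] := not_all_ex_not _ _ Hu.
  have [huv hn] := imply_to_and _ _ Hv.
  exists (u * t) => _. split.
  - split; first by move=> h; apply: hn; left.
    by rewrite mulrCA yt mulr0.
  - by move=> w hw; rewrite mulrCA hw mulr0.
  - exists v; split; first by rewrite mulrA [v * u]mulrC.
    by move=> h; apply: hn; right. }
pose g t := proj1_sig (constructive_indefinite_description _ (step t)).
have gP t : S t -> _ := proj2_sig (constructive_indefinite_description _ (step t)).
pose sq n := iter n g x.
have Ssq : forall n, S (sq n).
{ elim=> [|n IH]; first by split.
  by have [] := gP _ IH. }
have Hid : forall n, is_ideal (fun u => u * sq n = 0).
{ move=> n; split; first by rewrite mul0r.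
  + by move=> u v hu hv; rewrite mulrDl hu hv addr0.
  + by move=> r u hu; rewrite -mulrA hu mulr0. }
have Hinc : forall n u, u * sq n = 0 -> u * sq n.+1 = 0.
{ by move=> n u hu; have [_ H _] := gP _ (Ssq n); apply: H. }
have [N HN] := noeth _ Hid Hinc.
have [_ _ [v [hv1 hv2]]] := gP _ (Ssq N).
apply: hv2. exact: (HN N.+1 v (leqnSn N) hv1).
Qed.

Lemma nupow (G : zmodType) (R : comPzRingType) (nu : R -> option G) :
  (forall x y, nu (x * y) = vadd (nu x) (nu y)) -> nu 1 = Some 0 ->
  forall x n, nu (x ^+ n) = None -> nu x = None.
Proof.
move=> numul nu1 x; elim=> [|n IH]; first by rewrite expr0 nu1.
rewrite exprS numul; case Ex: (nu x) => [gx|] //.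
case E: (nu (x ^+ n)) => [h|] //. by rewrite -Ex; move=> _; apply: IH.
Qed.

Theorem mainTheorem9 (R : comPzRingType) (m : R -> Prop)
    (G : zmodType) (le : rel G) (nu : R -> option G)
    (b : R) (a : seq R) (Rb : comPzRingType) (phi : {rmorphism R -> Rb})
    (R1 : comPzRingType) (psi : Rb -> R1) :
  noetherian R -> is_local m ->
  ordered_group le -> is_valuation le nu -> centered_on le nu m ->
  local_blowup le nu b a phi psi ->
  nil_only_assoc R -> nil_only_assoc R1.
Proof.
move=> noeth [[mI m1 _] _] _ [numul _ nu1 nu0 _] _
  [nb _ [[t bt] lsurj linj] [psi1 psihom psiunit psisurj psiinj]] hna.
set A := blowup_ring phi b a.
set C := blowup_center le nu phi b a.
have R10 : (1:R) <> 0.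
{ move=> h; apply: m1. case: mI => m0 _ _. by rewrite h. }
have [[_ _ nilprimeR] [x0 hx0]] := (proj2 (hna (@nilrad R))) (fun y => iff_refl _).
have zdR := zd_nil noeth hna.
have nuNone : forall x, nilrad x -> nu x = None.
{ move=> x [n hn]; apply: (nupow numul nu1 (n := n)). by rewrite hn. }
have nubn : forall n, nu (b ^+ n) <> None.
{ by move=> n /(nupow numul nu1). }
have bnil : ~ nilrad b by move=> /nuNone.
have phi_inj : forall x y, phi x = phi y -> x = y.
{ move=> x y /linj [n hn]. apply/eqP; rewrite -subr_eq0; apply/eqP; apply: NNPP => hxy.
  apply: bnil; apply: (nil_pow (n:=n)); apply: (zdR (x - y)) => //.
  by rewrite mulrBr hn subrr. }
have phib_unit n : phi b ^+ n * t ^+ n = 1 := unit_pow n bt.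
have nil_phi : forall p, nilrad (phi p) -> nilrad p.
{ move=> p [k hk]; exists k; apply: phi_inj; by rewrite rmorphXn hk rmorph0. }
have phi_nil : forall p, nilrad p -> nilrad (phi p).
{ move=> p [k hk]; exists k; by rewrite -rmorphXn hk rmorph0. }
have WRb : forall u v : Rb, u * v = 0 -> v <> 0 -> nilrad u.
{ move=> u v uv v0. have [p [i hp]] := lsurj u. have [q [j hq]] := lsurj v.
  have pq0 : p * q = 0.
  { apply: phi_inj. by rewrite rmorphM -hp -hq rmorph0 mulrACA uv mul0r. }
  have q0 : q <> 0.
  { move=> q0; apply: v0; apply: (unit_cancel (phib_unit j)).
    by rewrite hq q0 rmorph0. }
  apply: (nil_unit (phib_unit i) hp). apply: phi_nil. exact: zdR pq0 q0. }
have nilRb_prime : forall u v : Rb, nilrad (u * v) -> nilrad u \/ nilrad v.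
{ move=> u v huv. have [p [i hp]] := lsurj u. have [q [j hq]] := lsurj v.
  have : nilrad (p * q).
  { apply: nil_phi. rewrite rmorphM -hp -hq mulrACA. exact: nil_mul. }
  case/nilprimeR => h; [left; apply: (nil_unit (phib_unit i) hp)
                        | right; apply: (nil_unit (phib_unit j) hq)]; exact: phi_nil. }
have Asub : is_subring A.
{ split.
  - by move=> S [].
  - move=> x y hx hy S HS hr ha; case: (HS) => _ Hs _; apply: Hs; [exact: hx | exact: hy].
  - move=> x y hx hy S HS hr ha; case: (HS) => _ _ Hs; apply: Hs; [exact: hx | exact: hy]. }
case: (Asub) => A1 AB AM.
have Aphi r : A (phi r) by move=> S _ hr _; exact: hr.
have A0 : A 0 by have := Aphi 0; rewrite rmorph0.
have AX x n : A x -> A (x ^+ n).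
{ move=> Ax; elim: n => [|n IH]; first by rewrite expr0. rewrite exprS; exact: AM. }
have psi0 : psi 0 = 0.
{ have [h _] := psihom 0 0 A0 A0. rewrite addr0 in h.
  apply/esym/(addrI (psi 0)); rewrite addr0; exact: h. }
have psiM x y : A x -> A y -> psi (x * y) = psi x * psi y.
{ by move=> hx hy; have [] := psihom x y hx hy. }
have psiX x n : A x -> psi (x ^+ n) = psi x ^+ n.
{ move=> Ax; elim: n => [|n IH]; first by rewrite !expr0.
  by rewrite !exprS psiM ?IH //; exact: AX. }
have Cnil : forall c, A c -> nilrad c -> C c.
{ move=> c Ac hc. split => //. have [e [n he]] := lsurj c. exists e, n. split => //.
  have ne : nu e = None.
  { apply: nuNone; apply: nil_phi; rewrite -he; exact: nil_mul. }
  rewrite ne. case E: (nu (b ^+ n)) => [g|] //; last by exfalso; exact: nubn E. }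
have psi_inj : forall x y, A x -> A y -> psi x = psi y -> x = y.
{ move=> x y Ax Ay h. have [c [Ac nC cxy]] := psiinj x y Ax Ay h.
  apply/eqP; rewrite -subr_eq0; apply/eqP; apply: NNPP => hne.
  apply: nC; apply: Cnil => //. apply: (WRb c (x - y)) => //.
  by rewrite mulrBr cxy subrr. }
have nil_psi : forall x, A x -> nilrad (psi x) -> nilrad x.
{ move=> x Ax [k hk]; exists k; apply: psi_inj => //; first exact: AX.
  by rewrite psiX // hk psi0. }
have psi_nil : forall x, A x -> nilrad x -> nilrad (psi x).
{ move=> x Ax [k hk]; exists k; by rewrite -psiX // hk psi0. }
have one_nil : ~ nilrad (1 : R1).
{ case=> k hk. rewrite expr1n in hk. apply: R10. apply: phi_inj.
  rewrite rmorph1 rmorph0. apply: psi_inj => //. by rewrite psi1 psi0. }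
have WR1 : forall y z : R1, y * z = 0 -> z <> 0 -> nilrad y.
{ move=> y z yz z0.
  have [x [s [Ax As nCs hys]]] := psisurj y.
  have [w [s' [Aw As' nCs' hzs]]] := psisurj z.
  have [ts hts] := psiunit s As nCs. have [ts' hts'] := psiunit s' As' nCs'.
  have xw : x * w = 0.
  { apply: psi_inj => //; first exact: AM.
    by rewrite psiM // -hys -hzs psi0 mulrACA yz mul0r. }
  have w0 : w <> 0.
  { move=> w0; apply: z0; apply: (unit_cancel hts'); by rewrite hzs w0 psi0. }
  apply: (nil_unit hts hys). apply: psi_nil => //. exact: WRb xw w0. }
have nilR1_prime : forall y1 y2 : R1, nilrad (y1 * y2) -> nilrad y1 \/ nilrad y2.
{ move=> y1 y2 h.
  have [x1 [s1 [Ax1 As1 nCs1 hy1]]] := psisurj y1.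
  have [x2 [s2 [Ax2 As2 nCs2 hy2]]] := psisurj y2.
  have [ts1 hts1] := psiunit s1 As1 nCs1. have [ts2 hts2] := psiunit s2 As2 nCs2.
  have : nilrad (x1 * x2).
  { apply: nil_psi; first exact: AM. rewrite psiM // -hy1 -hy2 mulrACA. exact: nil_mul. }
  case/nilRb_prime => hx; [left; apply: (nil_unit hts1 hy1)
                          | right; apply: (nil_unit hts2 hy2)]; exact: psi_nil. }
pose z0 := psi (phi x0).
have z0ne : z0 <> 0.
{ move=> h. have : phi x0 = 0.
  { apply: psi_inj => //. by rewrite -/z0 h psi0. }
  rewrite -(rmorph0 phi) => /phi_inj x00. apply: R10.
  have : nilrad (1:R) by apply/hx0; rewrite x00 mulr0.
  by case=> k; rewrite expr1n. }
have annz : forall y, nilrad y <-> y * z0 = 0.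
{ move=> y; split; last by move=> h; apply: WR1 h z0ne.
  move=> hy. have [x [s [Ax As nCs hys]]] := psisurj y.
  have [ts hts] := psiunit s As nCs.
  have hx : nilrad x by apply: nil_psi => //; rewrite -hys; exact: nil_mul.
  have [c [k hc]] := lsurj x.
  have hcn : nilrad c by apply: nil_phi; rewrite -hc; exact: nil_mul.
  have cx0 : c * x0 = 0 := proj1 (hx0 c) hcn.
  have xphix0 : x * phi x0 = 0.
  { apply: (unit_cancel (phib_unit k)). by rewrite mulrAC hc -rmorphM cx0 rmorph0. }
  have : psi x * z0 = 0 by rewrite -psiM // xphix0 psi0.
  rewrite -hys => h. apply: (unit_cancel hts). by rewrite mulrAC h. }
move=> P; split.
- case=> [[[P0 PD PM] P1 Pp] [w hw]] y. split.
  + move=> /hw hyw. apply: WR1 hyw _. move=> w0; apply: P1; apply/hw; by rewrite w0 mulr0.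
  + case=> k hk.
    have : P (y ^+ k) by rewrite hk.
    elim: k {hk} => [|k IH]; first by rewrite expr0 => /P1.
    rewrite exprS => /Pp [] //.
- move=> hP. split.
  + split; first split.
    * by apply/hP; exists 1%N; rewrite expr1.
    * move=> x y /hP/annz hx /hP/annz hy; apply/hP/annz; by rewrite mulrDl hx hy addr0.
    * move=> r x /hP/annz hx; apply/hP/annz; by rewrite -mulrA hx mulr0.
    * by move=> /hP.
    * move=> x y /hP/nilR1_prime [] h; [left|right]; exact/hP.
  + exists z0 => y; split; [move/hP/annz | move/annz/hP]; done.
Qed.
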